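(* Assume (A1), (A2), let $\kappa\ge\max_{|\xi|\le\beta}|f_0'(\xi)|$, and let $u_0$, $g$ be as follows: $u_0\in\mathcal X$ with $|u_0|\le\beta$ on $\widehat\Omega$, and (Case (C1)) $g\in C([0,\infty);\partial X)$ with $g(0,\cdot)=u_0$ on $\Omega_c^*$ and $|g(t,x)|\le\beta$ for all $t\ge0$, $x\in\Omega_c^*$. For a time step $\tau>0$ and $t_n=n\tau$, define the ETD1 scheme: $v^0=u_0$ and, for $n\ge0$, $v^{n+1}=w^n(\tau)$, where $w^n:[0,\tau]\to\mathcal X$ solves $$w^n_s+\kappa w^n=\mathcal Lw^n+\mathcal N[v^n],\ s\in(0,\tau],\ x\in\Omega^*;\quad w^n(s,x)=g(t_n+s,x),\ s\in[0,\tau],\ x\in\Omega_c^*;\quad w^n(0,x)=v^n(x),\ x\in\widehat\Omega,$$ with $\mathcal N[w](x)=\kappa w(x)+f_0(w(x))$. Then for every $\tau>0$, $\|v^n\|\le\beta$ for all $n\ge0$. The same holds in Case (C2) (periodic $u_0$, no boundary equation).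
   Context: Domain setting: one of (D1) $\Omega\subset\mathbb{R}^d$ is open, connected, bounded with Lipschitz boundary $\partial\Omega$; $\Omega_c\subset\mathbb{R}^d$ is a closed connected set with $\Omega_c\cap\Omega=\emptyset$ and $\partial\Omega\subset\Omega_c$; (D2) (discrete) given sets $\tilde\Omega,\tilde\Omega_c$ as in (D1) and the finite set $\Sigma$ of nodes of a mesh of $\tilde\Omega\cup\tilde\Omega_c$, put $\Omega=\tilde\Omega\cap\Sigma$, $\partial\Omega=\partial\tilde\Omega\cap\Sigma$, $\Omega_c=\tilde\Omega_c\cap\Sigma$. In both cases $\overline\Omega=\Omega\cup\partial\Omega$, $\widehat\Omega=\Omega\cup\Omega_c$; if $\Omega_c=\partial\Omega$ set $\Omega^*=\Omega$, $\Omega_c^*=\partial\Omega$, otherwise $\Omega^*=\overline\Omega$, $\Omega_c^*=\Omega_c\setminus\partial\Omega$. For $D\subset\mathbb{R}^d$, $C(D)$ denotes the real functions on $D$ that are sequentially continuous relative to $D$ (every function on a discrete set is continuous), and $C_b(D)$ its bounded elements. Let $\mathcal X=C(\overline\Omega)$ if $\Omega_c=\partial\Omega$, and otherwise $\mathcal X=\{w:\widehat\Omega\to\mathbb R:\ w|_{\overline\Omega}\in C(\overline\Omega),\ w|_{\Omega_c^*}\in C_b(\Omega_c^* )\}$, with norm $\|w\|=\sup_{x\in\widehat\Omega}|w(x)|$. Boundary cases: (C1) $X=\{w|_{\Omega^*}: w\in\mathcal X,\ w|_{\Omega_c^*}=0\}$, identified (via zero extension) with the subspace $\{w\in\mathcal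 X: w|_{\Omega_c^*}=0\}$, and $\partial X=C_b(\Omega_c^* )$; (C2) (periodic) $\Omega=\prod_{i=1}^d(a_i,b_i)$ (in (D2), its node set), and $X$ consists of restrictions to $\overline\Omega_+=\prod_i(a_i,b_i]$ of continuous $\Omega$-periodic functions on $\mathbb R^d$ (resp. periodic grid functions), identified with these periodic functions. $X$ carries the sup norm. Operators: $\mathcal L:D(\mathcal L)\to C_b(\Omega^* )$ is linear with $D(\mathcal L)\subset\mathcal X$. In (D1), $D(\mathcal L_0)=\{w\in D(\mathcal L)\cap X:\ \mathcal L w\in X\}$; in (D2), $D(\mathcal L_0)=X$; $\mathcal L_0=\mathcal L|_{D(\mathcal L_0)}:D(\mathcal L_0)\to X$. Assumption (A1): (a) for every $w\in D(\mathcal L)$ and $x_0\in\Omega^*$ with $w(x_0)=\sup_{x\in\widehat\Omega}w(x)$, one has $\mathcal Lw(x_0)\le 0$; (b) $D(\mathcal L_0)$ is dense in $X$; (c) there exists $\lambda_0>0$ such that $\lambda_0\mathcal I-\mathcal L_0:D(\mathcal L_0)\to X$ is surjective. Assumption (A2): $f:C_b(\Omega^* )\to C_b(\Omega^* )$ is given by $f[w](x)=f_0(w(x))$ for a continuously differentiable $f_0:\mathbb R\to\mathbb R$, and there is $\beta>0$ with $f_0(\beta)\le 0\le f_0(-\beta)$. The linear problem defining $w^n$ has a unique solution, so the scheme is well defined. *)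

(* Defs.v *)
From HB Require Import structures.
From mathcomp Require Import all_boot all_order all_algebra.
From mathcomp Require Import all_classical all_reals all_analysis.
Set Implicit Arguments. Unset Strict Implicit. Unset Printing Implicit Defensive.
Import Order.TTheory GRing.Theory Num.Theory.
Import numFieldNormedType.Exports.
Local Open Scope classical_set_scope.
Local Open Scope ring_scope.

Section Defs.
Variables (R : realType) (d : nat).
Local Notation P := 'rV[R]_d.

Definition bdry (A : set P) : set P := closure A `\` interior A.

(** Lipschitz (graph) boundary: near each boundary point, after an orthogonal
    change of coordinates, the domain is the subgraph of a Lipschitz function
    of the remaining coordinates (the coordinate [i] being the vertical one). *)
Definition lipschitz_boundary (A : set P) : Prop :=
  forall x, bdry A x ->
  exists (U : set P) (Q : 'M[R]_d) (i : 'I_d) (gam : P -> R) (Lc : R),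
    [/\ open U /\ U x, Q *m Q^T = 1%:M,
        (forall y y' : P, (forall j, j != i -> y 0 j = y' 0 j) -> gam y = gam y'),
        (forall y y' : P, `|gam y - gam y'| <= Lc * `|y - y'|) &
        (forall y : P, U y -> (A y <-> (y *m Q) 0 i < gam (y *m Q)))].

Definition domain_D1 (Om Omc : set P) : Prop :=
  [/\ open Om, connected Om, bounded_set Om & lipschitz_boundary Om] /\
  [/\ closed Omc, connected Omc, Omc `&` Om = set0 & bdry Om `<=` Omc].

Definition seq_cont_on (D : set P) (f : P -> R) : Prop :=
  forall (x : P) (u : nat -> P), D x -> (forall n, D (u n)) ->
    u n @[n --> \oo] --> x -> f (u n) @[n --> \oo] --> f x.

Definition bounded_on (D : set P) (f : P -> R) : Prop :=
  exists M : R, forall x, D x -> `|f x| <= M.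

(** data of a setting: [disc] = discrete case (D2), [per] = periodic case (C2);
    [Om0], [Omc0] are Omega, Omega_c (D1) resp. tilde Omega, tilde Omega_c (D2),
    [Sig] the node set (D2 only), [a], [b] the box corners (C2 only). *)
Record setting := Setting {
  disc : bool; per : bool;
  Om0 : set P; Omc0 : set P; Sig : set P; a : P; b : P }.

Definition box (S : setting) : set P :=
  [set x | forall i, a S 0 i < x 0 i < b S 0 i].
Definition box_plus (S : setting) : set P :=
  [set x | forall i, a S 0 i < x 0 i <= b S 0 i].

Definition valid_setting (S : setting) : Prop :=
  domain_D1 (Om0 S) (Omc0 S) /\
  (disc S -> finite_set (Sig S) /\ Sig S `<=` Om0 S `|` Omc0 S) /\
  (per S -> (forall i, a S 0 i < b S 0 i) /\ Om0 S = box S).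

Definition Om S : set P := if disc S then Om0 S `&` Sig S else Om0 S.
Definition Bd S : set P := if disc S then bdry (Om0 S) `&` Sig S else bdry (Om0 S).
Definition Omc S : set P := if disc S then Omc0 S `&` Sig S else Omc0 S.
Definition Ombar S : set P := Om S `|` Bd S.
Definition Omhat S : set P := Om S `|` Omc S.
Definition Ostar1 S : set P :=
  [set x | (Omc S = Bd S /\ Om S x) \/ (Omc S <> Bd S /\ Ombar S x)].
Definition Ocstar1 S : set P :=
  [set x | (Omc S = Bd S /\ Bd S x) \/ (Omc S <> Bd S /\ (Omc S `\` Bd S) x)].
Definition Oplus S : set P :=
  if disc S then box_plus S `&` Sig S else box_plus S.

(** points where functions live (hat Omega; in (C2) the closed-right box
    [Omega_+], resp. its nodes), Omega^*, and Omega_c^* (empty in (C2)) *)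
Definition Ohat S : set P := if per S then Oplus S else Omhat S.
Definition Ostar S : set P := if per S then Oplus S else Ostar1 S.
Definition Ocstar S : set P := if per S then set0 else Ocstar1 S.

(** Functions are represented as maps [P -> R] vanishing outside [Ohat S]. *)
Definition vanish_off S (w : P -> R) : Prop := forall x, ~ Ohat S x -> w x = 0.

Definition calX_C1 S (w : P -> R) : Prop :=
  vanish_off S w /\
  ((Omc S = Bd S /\ seq_cont_on (Ombar S) w) \/
   (Omc S <> Bd S /\ seq_cont_on (Ombar S) w /\
      seq_cont_on (Ocstar1 S) w /\ bounded_on (Ocstar1 S) w)).

Definition periodic S (F : P -> R) : Prop :=
  forall x i, F (x + (b S 0 i - a S 0 i) *: delta_mx 0 i) = F x.

Definition X_C2 S (w : P -> R) : Prop :=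
  vanish_off S w /\
  exists F : P -> R, periodic S F /\ (disc S \/ continuous F) /\
    forall x, Ohat S x -> F x = w x.

Definition calX S (w : P -> R) : Prop := if per S then X_C2 S w else calX_C1 S w.
Definition Xsp S (w : P -> R) : Prop :=
  if per S then X_C2 S w else calX_C1 S w /\ forall x, Ocstar S x -> w x = 0.

Definition inX_star S (h : P -> R) : Prop :=
  exists w, Xsp S w /\ forall x, Ostar S x -> w x = h x.

Definition DL0 S (DL : set (P -> R)) (L : (P -> R) -> (P -> R)) : set (P -> R) :=
  if disc S then Xsp S else [set w | DL w /\ Xsp S w /\ inX_star S (L w)].

Definition operator_L S (DL : set (P -> R)) (L : (P -> R) -> (P -> R)) : Prop :=
  [/\ DL `<=` calX S /\ DL (fun _ => 0),
      (forall (c : R) w1 w2, DL w1 -> DL w2 -> DL (fun x => c * w1 x + w2 x)),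
      (forall (c : R) w1 w2, DL w1 -> DL w2 -> forall x, Ostar S x ->
          L (fun y => c * w1 y + w2 y) x = c * L w1 x + L w2 x),
      (forall w, DL w -> seq_cont_on (Ostar S) (L w) /\ bounded_on (Ostar S) (L w)) &
      (forall w, DL0 S DL L w -> DL w /\ inX_star S (L w))].

Definition A1 S (DL : set (P -> R)) (L : (P -> R) -> (P -> R)) : Prop :=
  [/\ (forall w x0, DL w -> Ostar S x0 -> (forall x, Ohat S x -> w x <= w x0) ->
          L w x0 <= 0),
      (forall w, Xsp S w -> forall e : R, 0 < e ->
          exists2 w', DL0 S DL L w' & forall x, Ohat S x -> `|w x - w' x| <= e) &
      (exists2 lam0 : R, 0 < lam0 & forall h, Xsp S h ->
          exists2 w, DL0 S DL L w & forall x, Ostar S x -> lam0 * w x - L w x = h x)].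

(** Assumption (A2) (f[w](x) = f0(w(x))) *)
Definition A2 (f0 : R -> R) (beta : R) : Prop :=
  [/\ (forall x, derivable f0 x 1), continuous (derive1 f0), 0 < beta &
      f0 beta <= 0 <= f0 (- beta)].

Definition has_deriv_within (I : set R) (f : R -> R) (s l : R) : Prop :=
  forall e : R, 0 < e -> exists2 del : R, 0 < del &
    forall h, h != 0 -> `|h| < del -> I (s + h) -> `|(f (s + h) - f s) / h - l| <= e.

Definition Nop (kappa : R) (f0 : R -> R) (w : P -> R) : P -> R :=
  fun x => kappa * w x + f0 (w x).

Definition solves_step S (DL : set (P -> R)) (L : (P -> R) -> (P -> R))
    (kappa : R) (f0 : R -> R) (g : R -> P -> R) (tau t0 : R)
    (v : P -> R) (w : R -> P -> R) : Prop :=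
  [/\ (forall s, 0 <= s <= tau -> calX S (w s)) /\
      (forall s, 0 <= s <= tau -> forall e : R, 0 < e -> exists2 del : R, 0 < del &
          forall s', 0 <= s' <= tau -> `|s' - s| < del ->
            forall x, Ohat S x -> `|w s' x - w s x| <= e),
      (forall s, 0 < s <= tau -> DL (w s)),
      (forall s, 0 < s <= tau -> forall x, Ostar S x ->
          has_deriv_within [set r | 0 <= r <= tau] (fun r => w r x) s
            (L (w s) x + Nop kappa f0 v x - kappa * w s x)),
      (forall s, 0 <= s <= tau -> forall x, Ocstar S x -> w s x = g (t0 + s) x) &
      (forall x, Ohat S x -> w 0 x = v x)].

End Defs.

(* Main.v *)
Require Import Defs.
From HB Require Import structures.
From mathcomp Require Import all_boot all_order all_algebra.
From mathcomp Require Import all_classical all_reals all_analysis.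
From mathcomp Require Import ring lra.
Import Order.TTheory GRing.Theory Num.Theory.
Import numFieldNormedType.Exports.
Local Open Scope classical_set_scope.
Local Open Scope ring_scope.
Lemma core (R : realType) (T : Type) (Oh Os Oc : set T) (W : R -> T -> R) (tau beta kappa : R) :
 0 < tau -> 0 <= kappa ->
 (forall x, Oh x -> Os x \/ Oc x) ->
 (forall x, Oh x -> W 0 x <= beta) ->
 (forall s x, 0 <= s <= tau -> Oc x -> W s x <= beta) ->
 (forall s, 0 <= s <= tau -> forall e : R, 0 < e -> exists2 del : R, 0 < del &
    forall s', 0 <= s' <= tau -> `|s' - s| < del -> forall x, Oh x -> `|W s' x - W s x| <= e) ->
 (forall s, 0 <= s <= tau -> exists M, (forall x, Oh x -> W s x <= M) /\
      (M <= beta \/ exists2 x0, Oh x0 & W s x0 = M)) ->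
 (forall s x0, 0 < s <= tau -> Oh x0 -> Os x0 -> (forall x, Oh x -> W s x <= W s x0) ->
    exists l, has_deriv_within [set r | 0 <= r <= tau] (fun r => W r x0) s l /\
      l <= kappa * beta - kappa * W s x0) ->
 forall x, Oh x -> W tau x <= beta.
Proof.
move=> tau0 k0 OhOsc W0 WOc Wc Wmax Wder.
suff key : forall eps : R, 0 < eps -> forall x, Oh x -> W tau x <= beta + eps * (1 + tau).
  move=> x Ohx; apply/ler_addgt0Pr => e e0.
  have t1 : 0 < 1 + tau by lra.
  have := key (e / (1 + tau)) (divr_gt0 e0 t1) x Ohx.
  by rewrite divfK // gt_eqF.
move=> eps eps0.
pose B s := forall x, Oh x -> W s x <= beta + eps * (1 + s).
pose A := [set s | 0 <= s <= tau /\ forall s', 0 <= s' <= s -> B s'].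
have A0 : A 0.
  split; first by rewrite lexx ltW.
  move=> s' /andP[h1 h2] x Ohx; have -> : s' = 0 by apply/le_anti; rewrite h1 h2.
  have := W0 x Ohx; lra.
have Aub : ubound A tau by move=> s [/andP[]].
have hs : has_sup A by split; [exists 0 | exists tau].
set ss := sup A.
have ss0 : 0 <= ss by apply: sup_upper_bound.
have sstau : ss <= tau by apply: ge_sup => //; exists 0.
have F1 : forall s', 0 <= s' < ss -> B s'.
  move=> s' /andP[h1 h2].
  have [a Aa lta] := sup_gt (ex_intro _ 0 A0) h2.
  by case: Aa => _; apply; rewrite h1 /= ltW.
have in0 : forall s, 0 <= s <= tau -> 0 <= s <= tau by [].
have ss_pos : 0 < ss.
  have [del del0 Hd] := Wc 0 (ltac:(by rewrite lexx ltW)) eps eps0.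
  pose r := Num.min (del / 2) tau.
  have r0 : 0 < r by rewrite lt_min tau0 divr_gt0.
  have rt : r <= tau by rewrite ge_min lexx orbT.
  have rd : r < del by rewrite gt_min; apply/orP; left; lra.
  have Ar : A r.
    split; first by rewrite ltW.
    move=> s' /andP[h1 h2] x Ohx.
    have st : 0 <= s' <= tau by rewrite h1 /= (le_trans h2).
    have := Hd s' st ltac:(rewrite subr0 ger0_norm //; exact: le_lt_trans h2 rd) x Ohx.
    have := W0 x Ohx.
    have : 0 <= eps * s' by rewrite mulr_ge0 // ltW.
    move=> ? ? /ler_normlP [_ ?]; nra.
  apply: lt_le_trans r0 _; exact: sup_upper_bound.
have F3 : B ss.
  move=> x Ohx; apply/ler_addgt0Pr => e e0.
  have [del del0 Hd] := Wc ss ltac:(by rewrite ss0 sstau) e e0.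
  pose m := Num.min (del / 2) ss.
  have m0 : 0 < m by rewrite lt_min ss_pos divr_gt0.
  have mss : m <= ss by rewrite ge_min lexx orbT.
  have md : m < del by rewrite gt_min; apply/orP; left; lra.
  have h1 : 0 <= ss - m < ss by apply/andP; split; lra.
  have := F1 _ h1 x Ohx.
  have st : 0 <= ss - m <= tau by apply/andP; split; lra.
  have nm : `|ss - m - ss| < del.
    by rewrite (_ : ss - m - ss = - m) ?normrN ?gtr0_norm //; ring.
  have := Hd _ st nm x Ohx.
  move=> /ler_normlP [? _] ?.
  have : 0 <= eps * m by rewrite mulr_ge0 // ltW.
  nra.
have [M [HM HM2]] := Wmax ss ltac:(by rewrite ss0 sstau).
have [Mlt|Mge] := ltP M (beta + eps * (1 + ss)).
  have sst : ss = tau.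
    apply/eqP; rewrite eq_le sstau /=; rewrite leNgt; apply/negP => sslt.
    pose gap := beta + eps * (1 + ss) - M.
    have gap0 : 0 < gap by rewrite /gap subr_gt0.
    have [del del0 Hd] := Wc ss ltac:(by rewrite ss0 sstau) (gap / 2) ltac:(by rewrite divr_gt0).
    pose r := Num.min (ss + del / 2) tau.
    have rt : r <= tau by rewrite ge_min lexx orbT.
    have rs : ss < r by rewrite lt_min sslt andbT; lra.
    have Ar : A r.
      split; first by apply/andP; split; lra.
      move=> s' /andP[h1 h2].
      have [s'lt|s'ge] := ltP s' ss; first by apply: F1; rewrite h1 s'lt.
      move: s'ge; rewrite le_eqVlt => /orP[/eqP <- //|ss's'].
      move=> x Ohx.
      have st : 0 <= s' <= tau by apply/andP; split; lra.
      have hr : r <= ss + del / 2 by rewrite ge_min lexx.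
      have := Hd s' st ltac:(rewrite gtr0_norm; lra) x Ohx.
      have := HM x Ohx.
      have : 0 <= eps * (s' - ss) by apply: mulr_ge0; lra.
      rewrite /gap => ? ? /ler_normlP [_ ?]; nra.
    have := sup_upper_bound hs Ar; rewrite -/ss; lra.
  by rewrite -sst.
exfalso.
have [x0 Ohx0 Wx0] : exists2 x0, Oh x0 & W ss x0 = beta + eps * (1 + ss).
  case: HM2 => [Mb|[x0 Ohx0 Wx0]].
    have : 0 < eps * (1 + ss) by rewrite mulr_gt0 //; lra.
    lra.
  exists x0 => //; apply/le_anti; rewrite F3 //= Wx0 //.
have epsb : 0 < eps * (1 + ss) by rewrite mulr_gt0 //; lra.
case: (OhOsc x0 Ohx0) => [Osx0|Ocx0]; last first.
  have := WOc ss x0 ltac:(by rewrite ss0 sstau) Ocx0; lra.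
have [l [Hl lle]] := Wder ss x0 ltac:(by rewrite ss_pos sstau) Ohx0 Osx0
  ltac:(by move=> x Ohx; rewrite Wx0 F3).
have lneg : l <= 0.
  move: lle; rewrite Wx0 => lle.
  have : 0 <= kappa * (eps * (1 + ss)) by rewrite mulr_ge0 // ltW.
  nra.
have [del del0 Hd] := Hl (eps / 2) ltac:(by rewrite divr_gt0).
pose m := Num.min (del / 2) ss.
have m0 : 0 < m by rewrite lt_min ss_pos divr_gt0.
have mss : m <= ss by rewrite ge_min lexx orbT.
have md : m < del by rewrite gt_min; apply/orP; left; lra.
have := Hd (- m) ltac:(by rewrite oppr_eq0 gt_eqF) ltac:(by rewrite normrN gtr0_norm)
  ltac:(by rewrite /=; apply/andP; split; lra).
have h1 : 0 <= ss + - m < ss by apply/andP; split; lra.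
have := F1 _ h1 x0 Ohx0.
rewrite Wx0 => Hle.
have : (W (ss + - m) x0 - (beta + eps * (1 + ss))) / - m >= eps.
  rewrite invrN mulrN -mulNr ler_pdivlMr //; nra.
move=> Hq /ler_normlP [_ ?]; lra.
Qed.
Lemma nop_bound (R : realType) (f0 : R -> R) beta kappa :
  A2 f0 beta -> (forall xi, `|xi| <= beta -> `|derive1 f0 xi| <= kappa) ->
  forall xi, `|xi| <= beta -> - (kappa * beta) <= kappa * xi + f0 xi <= kappa * beta.
Proof.
case=> df _ b0 /andP[fb fmb] dk xi xib.
pose h := fun x : R => kappa * x + f0 x.
have hder : forall x : R, is_derive x (1:R) h (kappa + derive1 f0 x).
  move=> x; rewrite derive1E.
  have := derivableP (df x) => H.
  apply: is_deriveD.
  have := @is_deriveZ _ _ _ (@id R) kappa x 1 1 (is_derive_id x 1).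
  by rewrite [X in is_derive _ _ _ X]mulr1.
have hdv : forall x : R, derivable h x 1 by move=> x; exact: (hder x).(ex_derive).
have hd1 : forall x : R, derive1 h x = kappa + derive1 f0 x.
  by move=> x; rewrite derive1E; apply: derive_val.
have mono : forall x y, - beta <= x -> x <= y -> y <= beta -> h x <= h y.
  apply: ger0_derive1_ndecr.
  - by move=> x _; exact: hdv.
  - move=> x; rewrite in_itv /= => /andP[h1 h2]; rewrite hd1.
    have : `|x| <= beta by rewrite ler_norml; apply/andP; split; lra.
    move/dk/ler_normlP => [? _]; lra.
  - apply: derivable_within_continuous => x _; exact: hdv.
move: xib; rewrite ler_norml => /andP[l1 l2].
have := mono _ _ (lexx _) l1 l2; have := mono _ _ l1 l2 (lexx _).
rewrite /h => ? ?; apply/andP; split; lra.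
Qed.
Lemma seq_max_ex (T : eqType) (R : realType) (s : seq T) (f : T -> R) x1 :
  x1 \in s -> exists2 x0, x0 \in s & forall y, y \in s -> f y <= f x0.
Proof.
elim: s x1 => // a s IH x1 _.
case: s IH => [|b s'] IH.
  by exists a; rewrite ?mem_head // => y; rewrite inE => /eqP ->.
have [x0 x0s Hx0] := IH b (mem_head _ _).
have [fa|fa] := leP (f a) (f x0).
  exists x0; first by rewrite inE x0s orbT.
  by move=> y; rewrite inE => /orP[/eqP ->|/Hx0].
exists a; first exact: mem_head.
move=> y; rewrite inE => /orP[/eqP ->//|/Hx0 h]; exact: (le_trans h (ltW fa)).
Qed.

Lemma fin_max (R : realType) (T : choiceType) (A : set T) (f : T -> R) :
  finite_set A -> A !=set0 -> exists2 x0, A x0 & forall x, A x -> f x <= f x0.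
Proof.
move=> /finite_fsetP [X ->] [x1 Ax1].
have [x0 h1 h2] := @seq_max_ex _ _ (finmap.enum_fset X) f x1 Ax1.
by exists x0 => // x Ax; apply: h2.
Qed.

Lemma seq_within (R : realType) d (A : set 'rV[R]_d) (u : 'rV[R]_d -> R) :
  seq_cont_on A u -> {within A, continuous u}.
Proof.
move=> hs; apply/subspace_continuousP => x Ax.
apply/cvgrPdist_le => e e0.
apply: contrapT => H.
have ex : forall n : nat, exists y, [/\ A y, `|x - y| < n.+1%:R^-1 & e < `|u x - u y|].
  move=> n; apply: contrapT => Hn; apply: H.
  apply/nbhs_ballP; exists n.+1%:R^-1 => //= y.
  rewrite -ball_normE /= => hy Ay.
  rewrite leNgt; apply/negP => hlt; apply: Hn; exists y; split => //.
have [y Hy] := choice ex.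
have yx : y n @[n --> \oo] --> x.
  apply/cvgrPdist_lt => e' e'0.
  have := near_infty_natSinv_lt (PosNum e'0).
  apply: filterS => n hn; have [_ h _] := Hy n; exact: lt_trans h hn.
have := hs x y Ax (fun n => let: And3 h _ _ := Hy n in h) yx.
move/cvgrPdist_lt => /(_ e e0) /filter_ex [n hn].
have [_ _ h] := Hy n; lra.
Qed.
Lemma attain_gen (R : realType) (T : Type) (Oh K Oc : set T) (u : T -> R) c :
  (forall x, Oh x -> K x \/ Oc x) -> K `<=` Oh -> (forall x, Oc x -> u x <= c) ->
  (K !=set0 -> exists2 y, K y & forall x, K x -> u x <= u y) ->
  exists M, (forall x, Oh x -> u x <= M) /\ (M <= c \/ exists2 x0, Oh x0 & u x0 = M).
Proof.
move=> hOh KOh hOc hK.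
have [[y Ky]|K0] := pselect (K !=set0).
  have [y' Ky' Hy'] := hK (ex_intro _ y Ky).
  have [uc|uc] := leP (u y') c.
    exists c; split; last by left.
    move=> x /hOh [/Hy' h|/hOc //]; exact: le_trans h uc.
  exists (u y'); split; last by right; exists y' => //; apply: KOh.
  move=> x /hOh [/Hy' //|/hOc h]; exact: le_trans h (ltW uc).
exists c; split; last by left.
move=> x /hOh [Kx|/hOc //]; by exfalso; apply: K0; exists x.
Qed.

Lemma shift_box (R : realType) d (a b : 'rV[R]_d) (F : 'rV[R]_d -> R) :
  (forall i, a 0 i < b 0 i) ->
  (forall x i, F (x + (b 0 i - a 0 i) *: delta_mx 0 i) = F x) ->
  forall z : 'rV[R]_d, (forall i, a 0 i <= z 0 i <= b 0 i) ->
  exists2 z' : 'rV[R]_d, (forall i, a 0 i < z' 0 i <= b 0 i) & F z' = F z.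
Proof.
move=> ab per z zK.
suff H : forall k, exists z' : 'rV[R]_d, [/\ forall i, a 0 i <= z' 0 i <= b 0 i,
    forall i : 'I_d, (i < k)%N -> a 0 i < z' 0 i & F z' = F z].
  have [z' [h1 h2 h3]] := H d; exists z' => // i.
  by have := h1 i; have := h2 i (ltn_ord i) => h /andP[_ ->]; rewrite h.
elim=> [|k [z' [h1 h2 h3]]]; first by exists z.
have [kd|kd] := ltnP k d; last first.
  exists z'; split => // i ik; apply: h2; apply: leq_trans (ltn_ord i) kd.
pose i0 := Ordinal kd.
have [e|ne] := eqVneq (z' 0 i0) (a 0 i0); last first.
  exists z'; split => // i; rewrite ltnS leq_eqVlt => /orP[/eqP ik|/h2 //].
  have -> : i = i0 by apply/val_inj.
  by have /andP[h _] := h1 i0; rewrite lt_def ne h.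
exists (z' + (b 0 i0 - a 0 i0) *: delta_mx 0 i0); split; last by rewrite per.
- move=> i; rewrite !mxE; have [->|ni] := eqVneq i i0.
    by rewrite eqxx mulr1 e; have := ab i0 => h; apply/andP; split; lra.
  by rewrite andbF mulr0 addr0.
- move=> i ik; rewrite !mxE; have [->|ni] := eqVneq i i0.
    by rewrite eqxx mulr1 e; have := ab i0 => h; lra.
  rewrite andbF mulr0 addr0; apply: h2.
  move: ik; rewrite ltnS leq_eqVlt => /orP[/eqP ik|//].
  by exfalso; move/eqP: ni; apply; apply/val_inj.
Qed.
Lemma closure_compact (R : realType) d (A : set 'rV[R]_d) :
  bounded_set A -> compact (closure A).
Proof.
move=> [M [Mr HM]]; apply: bounded_closed_compact; last exact: closed_closure.
exists (M + 1); split; first by rewrite realD // real1.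
move=> N MN x clx.
have := HM (N - 1) ltac:(lra) => HA.
have [y [Ay bxy]] := clx (ball x 1) (nbhsx_ballx x 1 ltr01).
have := HA y Ay; rewrite -ball_normE /= in bxy => /= hy.
have := ler_distD y x 0; rewrite !subr0 => h.
rewrite /= -(normrN (x - y)) opprB in bxy.
have : `|x| <= `|x - y| + `|y|.
  by rewrite (le_trans _ (ler_normD _ _)) // subrK.
rewrite distrC in bxy; lra.
Qed.
Lemma attain (R : realType) d (S : setting R d) (u : 'rV[R]_d -> R) c :
  valid_setting S -> calX S u -> (forall x, Ocstar S x -> u x <= c) ->
  exists M, (forall x, Ohat S x -> u x <= M) /\ (M <= c \/ exists2 x0, Ohat S x0 & u x0 = M).
Proof.
move=> [[[oOm _ bOm _] [_ _ _ bdOmc]] [hdisc hper]] hu hc.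
have [hp|hp] := boolP (per S).
- have OhE : Ohat S = Oplus S by rewrite /Ohat hp.
  have [ab Ombox] := hper hp.
  move: hu; rewrite /calX hp => -[_ [F [Fper [hF FE]]]].
  rewrite OhE in FE *.
  apply: (@attain_gen _ _ _ (Oplus S) set0) => //; first by move=> x; left.
  move=> hne.
  have [hd|hd] := boolP (disc S).
    have [fin _] := hdisc hd.
    apply: fin_max => //; rewrite /Oplus hd; exact: finite_setIr.
  have Oplus_sub : forall x, Oplus S x -> box_plus S x.
    by rewrite /Oplus (negbTE hd).
  case: hF => [hd'|Fc]; first by rewrite hd' in hd.
  pose Kc := [set v : 'rV[R]_d | forall i, `[a S 0 i, b S 0 i]%classic (v ord0 i)].
  have cK : compact Kc by apply: (@rV_compact _ _ (fun i => `[a S 0 i, b S 0 i]%classic)) => i; exact: segment_compact.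
  have Kne : Kc !=set0.
    exists (a S); move=> i /=; rewrite in_itv /= lexx; exact: ltW (ab i).
  have cF : {within Kc, continuous F} by apply: continuous_subspaceT.
  have [y yK ymax] := EVT_max_rV Kne cK cF.
  have o0 : (0 : 'I_1) = ord0 by apply/val_inj.
  have [y' y'K Fy'] := @shift_box _ _ _ _ F ab Fper y ltac:(move=> i; rewrite o0;
     move: yK; rewrite inE => /(_ i); rewrite /= in_itv /=; exact).
  exists y'.
    by rewrite /Oplus (negbTE hd).
  move=> x Ox; rewrite -!FE //; last by rewrite /Oplus (negbTE hd).
  rewrite Fy'; apply: ymax; rewrite inE => i /=; rewrite in_itv /= -o0.
  have := Oplus_sub x Ox i => /andP[h1 h2]; rewrite h2 andbT; exact: ltW.
have OhE : Ohat S = Omhat S by rewrite /Ohat (negbTE hp).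
have OcE : Ocstar S = Ocstar1 S by rewrite /Ocstar (negbTE hp).
move: hu; rewrite /calX (negbTE hp) => -[_ hu].
have sc : seq_cont_on (Ombar S) u by case: hu => [[]|[_ []]].
rewrite OhE; rewrite OcE in hc.
have BdOmc : Bd S `<=` Omc S.
  rewrite /Bd /Omc; case: (disc S) => x; [case=> h1 h2; split => //; exact: bdOmc | exact: bdOmc].
apply: (@attain_gen _ _ _ (Ombar S) (Ocstar1 S)) => //.
- move=> x [Omx|Omcx]; first by left; left.
  have [Bx|nBx] := pselect (Bd S x); first by left; right.
  right; rewrite /Ocstar1 /=.
  have [e|ne] := pselect (Omc S = Bd S); first by left; split => //; rewrite -e.
  by right; split.
- move=> x [Omx|/BdOmc Omcx]; [by left|by right].
move=> hne.
have [hd|hd] := boolP (disc S).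
  have [fin _] := hdisc hd.
  apply: fin_max => //; apply: (sub_finite_set _ fin).
  by rewrite /Ombar /Om /Bd hd => x [[]|[]].
have cl : Ombar S = closure (Om0 S).
  rewrite /Ombar /Om /Bd (negbTE hd) /bdry.
  apply/seteqP; split => x.
    by case=> [h|[]] //; apply: subset_closure.
  move=> h; have [Ox|nOx] := pselect (Om0 S x); first by left.
  right; split => // /interior_subset; exact: nOx.
have cK : compact (Ombar S) by rewrite cl; exact: closure_compact.
have [y yK ymax] := EVT_max_rV hne cK (@seq_within R d _ u sc).
exists y; first by rewrite inE in yK.
by move=> x Kx; apply: ymax; rewrite inE.
Qed.

Lemma seq_cont_neg (R : realType) d (A : set 'rV[R]_d) (u : 'rV[R]_d -> R) :
  seq_cont_on A u -> seq_cont_on A (fun x => - u x).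
Proof. by move=> h x s Ax As sx; apply: cvgN; exact: h. Qed.

Lemma bounded_neg (R : realType) d (A : set 'rV[R]_d) (u : 'rV[R]_d -> R) :
  bounded_on A u -> bounded_on A (fun x => - u x).
Proof. by move=> [M hM]; exists M => x Ax; rewrite normrN; exact: hM. Qed.

Lemma calX_neg (R : realType) d (S : setting R d) (u : 'rV[R]_d -> R) :
  calX S u -> calX S (fun x => - u x).
Proof.
have vn : vanish_off S u -> vanish_off S (fun x => - u x).
  by move=> h x nx; rewrite h ?oppr0.
rewrite /calX; case: (per S).
  move=> [v0 [F [Fp [hF FE]]]]; split; first exact: vn.
  exists (fun x => - F x); split.
    by move=> x i; rewrite Fp.
  split; last by move=> x Ox; rewrite FE.
  case: hF => [h|Fc]; [by left|right].
  by move=> x; apply: continuousN; exact: Fc.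
move=> [v0 [[e sc]|[e [sc [sc2 bd]]]]]; split; try exact: vn.
  by left; split => //; exact: seq_cont_neg.
right; split => //; split; first exact: seq_cont_neg.
split; [exact: seq_cont_neg | exact: bounded_neg].
Qed.

Lemma deriv_neg (R : realType) (I : set R) (f : R -> R) s l :
  has_deriv_within I f s l -> has_deriv_within I (fun r => - f r) s (- l).
Proof.
move=> h e e0; have [del del0 hd] := h e e0; exists del => // k k0 kd Ik.
rewrite (_ : (- f (s + k) - - f s) / k - - l = - ((f (s + k) - f s) / k - l)).
  by rewrite normrN; exact: hd.
by rewrite !mulrBl; ring.
Qed.

Lemma Ohat_split (R : realType) d (S : setting R d) x :
  Ohat S x -> Ostar S x \/ Ocstar S x.
Proof.
rewrite /Ohat /Ostar /Ocstar; case: (per S); first by left.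
rewrite /Omhat /Ostar1 /Ocstar1 /Ombar => -[Omx|Omcx].
  have [e|ne] := pselect (Omc S = Bd S); left; [left|right]; split => //; by left.
have [e|ne] := pselect (Omc S = Bd S).
  by right; left; split => //; rewrite -e.
have [Bx|nBx] := pselect (Bd S x).
  by left; right; split => //; right.
by right; right; split.
Qed.
Theorem theorem3p1 (R : realType) (d : nat) (S : setting R d)
  (DL : set ('rV[R]_d -> R)) (L : ('rV[R]_d -> R) -> ('rV[R]_d -> R))
  (f0 : R -> R) (beta kappa : R)
  (u0 : 'rV[R]_d -> R) (g : R -> 'rV[R]_d -> R) (tau : R)
  (v : nat -> 'rV[R]_d -> R) (w : nat -> R -> 'rV[R]_d -> R) :
  valid_setting S ->
  operator_L S DL L ->
  A1 S DL L ->
  A2 f0 beta ->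
  (forall xi, `|xi| <= beta -> `|derive1 f0 xi| <= kappa) ->
  (* initial datum *)
  calX S u0 -> (forall x, Ohat S x -> `|u0 x| <= beta) ->
  (* boundary datum g in C([0,oo); C_b(Omega_c^* )) (only relevant in (C1)) *)
  (forall t, 0 <= t -> bounded_on (Ocstar S) (g t) /\ seq_cont_on (Ocstar S) (g t)) ->
  (forall t, 0 <= t -> forall e : R, 0 < e -> exists2 del : R, 0 < del &
      forall t', 0 <= t' -> `|t' - t| < del ->
        forall x, Ocstar S x -> `|g t' x - g t x| <= e) ->
  (forall x, Ocstar S x -> g 0 x = u0 x) ->
  (forall t x, 0 <= t -> Ocstar S x -> `|g t x| <= beta) ->
  (* the ETD1 scheme *)
  0 < tau ->
  (forall x, Ohat S x -> v 0%N x = u0 x) ->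
  (forall n, solves_step S DL L kappa f0 g tau (n%:R * tau) (v n) (w n)) ->
  (forall n x, Ohat S x -> v n.+1 x = w n tau x) ->
  forall n x, Ohat S x -> `|v n x| <= beta.
Proof.
move=> vS opL [A1a A1b A1c] hA2 hk u0X u0b gb gc g0 gbeta tau0 v0 hsol vS1.
have k0 : 0 <= kappa.
  case: hA2 => _ _ b0 _.
  have h := hk 0 ltac:(by rewrite normr0 ltW).
  exact: le_trans (normr_ge0 _) h.
have Nb := @nop_bound R f0 beta kappa hA2 hk.
case: opL => [[DLX DL0] DLlin Llin Lcb DL0p].
have L0 : forall x, Ostar S x -> L (fun _ => 0) x = 0.
  move=> x Ox; have := Llin 1 (fun _ => 0) (fun _ => 0) DL0 DL0 x Ox.
  rewrite (_ : (fun y => 1 * 0 + 0) = fun _ => 0); last first.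
    by apply: funext => y; rewrite mul1r addr0.
  lra.
elim=> [|n IH] x Ohx; first by rewrite v0 //; exact: u0b.
rewrite vS1 //.
have [[wX wC] wDL wder wbd w0] := hsol n.
have t0 : 0 <= n%:R * tau by rewrite mulr_ge0 // ltW.
have WOcb : forall s x, 0 <= s <= tau -> Ocstar S x -> `|w n s x| <= beta.
  move=> s y hs Oy; rewrite wbd //; apply: gbeta => //.
  case/andP: hs => s0 _; exact: addr_ge0.
have Wv0 : forall x, Ohat S x -> `|w n 0 x| <= beta by move=> y Oy; rewrite w0 //; exact: IH.
have up : w n tau x <= beta.
  apply: (@core _ _ (Ohat S) (Ostar S) (Ocstar S) (w n) tau beta kappa) => //.
  - exact: Ohat_split.
  - by move=> y Oy; have := Wv0 y Oy => /ler_normlP [].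
  - by move=> s y hs Oy; have := WOcb s y hs Oy => /ler_normlP [].
  - move=> s hs; apply: attain => //; first exact: wX.
    by move=> y Oy; have := WOcb s y hs Oy => /ler_normlP [].
  - move=> s x0 hs Ohx0 Osx0 hmax.
    have hs' : 0 < s <= tau by [].
    exists (L (w n s) x0 + Nop kappa f0 (v n) x0 - kappa * w n s x0); split.
      exact: wder.
    have := A1a (w n s) x0 (wDL s hs') Osx0 hmax.
    have := Nb (v n x0) (IH x0 Ohx0); rewrite /Nop => /andP[_ ?] ?; lra.
have lo : - w n tau x <= beta.
  apply: (@core _ _ (Ohat S) (Ostar S) (Ocstar S) (fun s y => - w n s y) tau beta kappa) => //.
  - exact: Ohat_split.
  - by move=> y Oy; have := Wv0 y Oy => /ler_normlP [].
  - by move=> s y hs Oy; have := WOcb s y hs Oy => /ler_normlP [].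
  - move=> s hs e e0; have [del del0 hd] := wC s hs e e0; exists del => // s' hs' sd y Oy.
    rewrite (_ : - w n s' y - - w n s y = - (w n s' y - w n s y)); last by ring.
    rewrite normrN; exact: hd.
  - move=> s hs; apply: attain => //; first by apply: calX_neg; exact: wX.
    by move=> y Oy; have := WOcb s y hs Oy => /ler_normlP [].
  - move=> s x0 hs Ohx0 Osx0 hmax.
    have hs' : 0 < s <= tau by [].
    exists (- (L (w n s) x0 + Nop kappa f0 (v n) x0 - kappa * w n s x0)); split.
      exact/deriv_neg/wder.
    have hD := DLlin (-1) (w n s) (fun _ => 0) (wDL s hs') DL0.
    have := A1a _ x0 hD Osx0 ltac:(move=> y Oy /=; rewrite !mulN1r !addr0; exact: hmax y Oy).
    rewrite (Llin (-1) (w n s) (fun _ => 0) (wDL s hs') DL0 x0 Osx0) L0 // => ?.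
    have := Nb (v n x0) (IH x0 Ohx0); rewrite /Nop => /andP[? _]; lra.
by rewrite ler_norml up andbT lerNl.
Qed.
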